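(* Let $G$ be a finite group with $d(G) \geq 2$. Then $d(G/\mathrm{Cyc}(G)) = d(G)$.
   Context: For a finite group $H$, $d(H)$ denotes the minimal size of a generating set of $H$. The cycliciser of $G$ is $\mathrm{Cyc}(G) = \{c \in G \mid \langle c,g\rangle \text{ is cyclic for all } g \in G\}$; it is a normal subgroup of $G$. *)

(* Defs.v *)
From mathcomp Require Import all_boot all_fingroup all_solvable.
Set Implicit Arguments. Unset Strict Implicit. Unset Printing Implicit Defensive.
Local Open Scope group_scope.

Definition gen_by (gT : finGroupType) (G : {set gT}) (n : nat) : bool :=
  [exists A : {set gT}, (A \subset G) && (#|A| == n) && (<<A>> == G)].

Lemma gen_by_exists (gT : finGroupType) (G : {group gT}) :
  exists n, gen_by G n.
Proof.
exists #|G|; apply/existsP; exists (G : {set gT}).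
by rewrite subxx eqxx /= genGid eqxx.
Qed.

Definition dgen (gT : finGroupType) (G : {group gT}) : nat :=
  ex_minn (gen_by_exists G).

Definition Cyc (gT : finGroupType) (G : {set gT}) : {set gT} :=
  [set c in G | [forall g in G, cyclic <<[set c; g]>>]].

(* Main.v *)
Require Import Defs.
From mathcomp Require Import all_boot all_fingroup all_solvable.

Set Implicit Arguments. Unset Strict Implicit.
Local Open Scope group_scope.

Section Aux.
Variable gT : finGroupType.
Implicit Types (G H : {group gT}) (x y : gT).

Lemma gen2_sub x y H : x \in H -> y \in H -> <<[set x; y]>> \subset H.
Proof. by move=> xH yH; rewrite gen_subG subUset !sub1set xH yH. Qed.

Lemma gen2_l x y : x \in <<[set x; y]>>.
Proof. by rewrite mem_gen // set21. Qed.

Lemma gen2_r x y : y \in <<[set x; y]>>.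
Proof. by rewrite mem_gen // set22. Qed.

Lemma Cyc_group_set G : group_set (Cyc G).
Proof.
apply/group_setP; split.
  rewrite inE group1 /=; apply/forall_inP => g Gg.
  apply/cyclicP; exists g; apply/eqP; rewrite eqEsubset.
  rewrite gen2_sub ?group1 ?cycle_id //= cycle_subG gen2_r //.
move=> c c'; rewrite !inE => /andP [Gc /forall_inP Hc] /andP [Gc' /forall_inP Hc'].
rewrite groupM //=; apply/forall_inP => g Gg.
have /cyclicP [y Ey] := Hc g Gg.
have Gy : y \in G by have := cycle_id y; rewrite -Ey; apply/subsetP/gen2_sub.
apply: cyclicS (Hc' y Gy).
have yin : <[y]> \subset <<[set c'; y]>> by rewrite cycle_subG gen2_r.
apply: gen2_sub; first rewrite groupM ?gen2_l //.
  by apply: (subsetP yin); rewrite -Ey gen2_l.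
by apply: (subsetP yin); rewrite -Ey gen2_r.
Qed.

Lemma dgen_min G n : gen_by G n -> dgen G <= n.
Proof. by rewrite /dgen; case: ex_minnP => m _ /(_ n). Qed.

Lemma dgen_spec G : exists A : {set gT},
  [/\ A \subset G, #|A| = dgen G & <<A>> = G].
Proof.
rewrite /dgen; case: ex_minnP => m /existsP [A /andP [/andP [sAG /eqP cA] /eqP gA]] _.
by exists A.
Qed.

Lemma gen_by_card G (A : {set gT}) : A \subset G -> <<A>> = G -> gen_by G #|A|.
Proof. by move=> sAG gA; apply/existsP; exists A; rewrite sAG eqxx gA eqxx. Qed.

End Aux.

Theorem lemma2p3 (gT : finGroupType) (G : {group gT}) :
  2 <= dgen G -> dgen (G / Cyc G)%G = dgen G.
Proof.
move=> d2.
pose CG : {group gT} := Group (Cyc_group_set G).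
change (dgen ((G / CG)%G) = dgen G).
have CGP c : c \in CG -> c \in G /\ forall g, g \in G -> cyclic <<[set c; g]>>.
  by rewrite inE => /andP [Gc /forall_inP H].
have sCG : CG \subset G by apply/subsetP => c /CGP [].
have sCZ : CG \subset 'Z(G).
  apply/subsetP => c /CGP [Gc Hc]; apply/centerP; split => // g Gg.
  have ab := cyclic_abelian (Hc g Gg).
  have := subsetP ab c (gen2_l c g) => /centP; apply; exact: gen2_r.
have nCG : CG <| G by apply: sub_center_normal.
have nCGs : G \subset 'N(CG) by case/andP: nCG.
have cycC : cyclic CG.
  have [c0 Cc0 maxc] : exists2 c0, c0 \in CG & forall c, c \in CG -> #[c] <= #[c0].
    case: (@arg_maxnP _ 1 (mem CG) (fun x => #[x]) (group1 CG)) => c0 Cc0 H.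
    by exists c0.
  apply/cyclicP; exists c0; apply/eqP; rewrite eqEsubset cycle_subG Cc0 andbT.
  apply/subsetP => c Cc.
  have [Gc0 Hc0] := CGP _ Cc0.
  have [Gc _] := CGP _ Cc.
  have /cyclicP [y Ey] := Hc0 c Gc.
  have Cy : y \in CG by have := cycle_id y; rewrite -Ey; apply/subsetP/gen2_sub.
  have s0y : <[c0]> \subset <[y]> by rewrite cycle_subG; have := gen2_l c0 c; rewrite Ey.
  have e : <[c0]> = <[y]>.
    by apply/eqP; rewrite eqEcard s0y /= -/#[y] -/#[c0] maxc.
  by rewrite e -Ey gen2_r.
apply/eqP; rewrite eqn_leq; apply/andP; split.
  have [A [sAG cA gA]] := dgen_spec G.
  have sAN : A \subset 'N(CG) := subset_trans sAG nCGs.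
  have s1 : coset CG @* A \subset (G / CG)%G by rewrite morphimS.
  have g1 : <<coset CG @* A>> = (G / CG)%G by rewrite -morphim_gen // gA.
  apply: leq_trans (dgen_min (gen_by_card s1 g1)) _.
  by rewrite -cA leq_morphim.
have [B [sBQ cB gB]] := dgen_spec ((G / CG)%G).
pose A := (fun b : coset_of CG => repr b) @: B.
have cA : #|A| <= #|B| by apply: leq_imset_card.
have sAN : A \subset 'N(CG).
  by apply/subsetP => _ /imsetP [b _ ->]; apply: repr_coset_norm.
have eAB : coset CG @* A = B.
  rewrite morphimEsub // -imset_comp.
  by rewrite (eq_imset _ coset_reprK) imset_id.
have sAG : A \subset G.
  apply/subsetP => x Ax; rewrite -(quotientGK nCG); apply/morphpreP; split.
    exact: (subsetP sAN).
  by apply: (subsetP sBQ); rewrite -eAB mem_morphim // (subsetP sAN).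
have GAC : G \subset CG * <<A>>.
  rewrite -quotientK; last by rewrite gen_subG.
  have eAB2 : A / CG = B := eAB.
  by rewrite quotient_gen // eAB2 gB quotientGK.
case: (set_0Vmem A) => [A0 | [a Aa]].
  have : G \subset CG by rewrite (subset_trans GAC) // A0 gen0 mulg1.
  move=> sGC.
  have cG : cyclic G by apply: cyclicS sGC cycC.
  have [g eg] := cyclicP cG.
  have : dgen G <= 1.
    rewrite -(cards1 g); apply: dgen_min; apply: gen_by_card.
      by rewrite sub1set eg cycle_id.
    by rewrite eg.
  by move=> h; have := leq_trans d2 h.
have [c0 ec0] := cyclicP cycC.
have Ga : a \in G by apply: (subsetP sAG).
have Gc0 : c0 \in G by apply: (subsetP sCG); rewrite ec0 cycle_id.
have Cc0 : c0 \in CG by rewrite ec0 cycle_id.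
have [_ Hc0] := CGP c0 Cc0.
have /cyclicP [y Ey] := Hc0 a Ga.
pose A' := y |: (A :\ a).
have Gy : y \in G by have := cycle_id y; rewrite -Ey; apply/subsetP/gen2_sub.
have sA'G : A' \subset G.
  by rewrite subUset sub1set Gy (subset_trans (subsetDl _ _)).
have cA' : #|A'| <= #|A|.
  rewrite cardsU1 (cardsD1 a A) Aa add1n.
  by case: (y \in A :\ a).
have yin : <[y]> \subset <<A'>> by rewrite cycle_subG mem_gen // setU11.
have sAA' : A \subset <<A'>>.
  apply/subsetP => x Ax; case: (eqVneq x a) => [-> | nxa].
    by apply: (subsetP yin); rewrite -Ey gen2_r.
  by rewrite mem_gen // setU1r // in_setD1 nxa.
have sCA' : CG \subset <<A'>>.
  by rewrite ec0 cycle_subG (subsetP yin) // -Ey gen2_l.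
have gA' : <<A'>> = G.
  apply/eqP; rewrite eqEsubset gen_subG sA'G /=.
  by rewrite (subset_trans GAC) // mul_subG // gen_subG.
apply: leq_trans (dgen_min (gen_by_card sA'G gA')) _.
by rewrite -cB (leq_trans cA').
Qed.
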